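(* Assume the network $\Sigma$ is well-posed, let $\mathcal{A}\subset X$ be nonempty and closed, and suppose $\Sigma$ is eISS with respect to $\mathcal{A}$ with constants $\rho\in[0,1)$, $C\ge1$ and gain $\gamma\in\mathcal{K}$, i.e. $|x(k,\xi,u)|_{\mathcal{A}}\le\max\{C\rho^k|\xi|_{\mathcal{A}},\gamma(\|u\|_\infty)\}$ for all $\xi\in X$, $u\in\mathcal{U}$, $k\in\mathbb{N}_0$. Then for any function $V:X\to[0,\infty)$ and constants $\underline w,\overline w,b>0$ satisfying $\underline w|\xi|_{\mathcal{A}}^b\le V(\xi)\le\overline w|\xi|_{\mathcal{A}}^b$ for all $\xi\in X$, and for every $\kappa\in(0,1)$, there exists $M\in\mathbb{N}$ such that $V(x(M,\xi,u))\le\max\{\kappa V(\xi),\overline w\,\gamma(\|u\|_\infty)^b\}$ for all $\xi\in X$ and all $u\in\mathcal{U}$. In particular, one can choose any $M\in\mathbb{N}$ satisfying $M\ge\frac1b\log_\rho\big(\frac{\kappa\underline w}{C^b\overline w}\big)$, and $V$ is an exponential $M$-step ISS Lyapunov function for $\Sigma$.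
   Context: Setting: for each $i\in\mathbb{N}$ fix positive integers $n_i,p_i$, norms on $\mathbb{R}^{n_i},\mathbb{R}^{p_i}$, a finite $I_i\subset\mathbb{N}\setminus\{i\}$ with each $\{j: i\in I_j\}$ finite, and continuous $f_i:\mathbb{R}^{n_i}\times\prod_{j\in I_i}\mathbb{R}^{n_j}\times\mathbb{R}^{p_i}\to\mathbb{R}^{n_i}$. $X$ (resp. $U$) is the space of sequences $(x_i)$, $x_i\in\mathbb{R}^{n_i}$ (resp. $(u_i)$, $u_i\in\mathbb{R}^{p_i}$) with finite sup-norm $|\cdot|_\infty$; $f(x,u)_i=f_i(x_i,(x_j)_{j\in I_i},u_i)$; network $\Sigma$: $x(k+1)=f(x(k),u(k))$; well-posed means $f(X\times U)\subset X$. $\mathcal{U}$: sequences $u:\mathbb{N}_0\to U$ with $\|u\|_\infty=\sup_k|u(k)|_\infty<\infty$; $x(k,\xi,u)$ the solution with $x(0)=\xi$. $|x|_{\mathcal{A}}=\inf_{y\in\mathcal{A}}|x-y|_\infty$. An exponential (eISS) $M$-step ISS Lyapunov function is a function $V$ with $\underline w|\xi|_{\mathcal{A}}^b\le V(\xi)\le\overline w|\xi|_{\mathcal{A}}^b$ and $V(x(M,\xi,u))\le\max\{\kappa V(\xi),\tilde\gamma(\|u\|_\infty)\}$ for some $\kappa\in[0,1)$, $\tilde\gamma\in\mathcal{K}$, all $\xi\in X,u\in\mathcal{U}$. $\mathcal{K}$ denotes continuous strictly increasing functions $[0,\infty)\to[0,\infty)$ vanishing at $0$. *)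

(* Defs.v *)
From HB Require Import structures.
From mathcomp Require Import all_boot all_order all_algebra.
From mathcomp Require Import all_classical all_reals all_analysis.
Unset Printing Implicit Defensive.
Import Order.TTheory GRing.Theory Num.Theory.
Import numFieldNormedType.Exports.
Local Open Scope classical_set_scope.
Local Open Scope ring_scope.

Section Network.
Variable R : realType.

Definition is_norm (d : nat) (N : 'rV[R]_d -> R) : Prop :=
  [/\ forall v, 0 <= N v,
      forall v, N v = 0 -> v = 0,
      forall a v, N (a *: v) = `|a| * N v
    & forall v w, N (v + w) <= N v + N w].

Definition classK (g : R -> R) : Prop :=
  [/\ g 0 = 0,
      {within [set x : R | 0 <= x], continuous g}
    & forall x y, 0 <= x -> x < y -> g x < g y].

Definition seqT (d : nat -> nat) := forall i : nat, 'rV[R]_(d i).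

Definition supnorm {d : nat -> nat} (N : forall i, 'rV[R]_(d i) -> R)
  (x : seqT d) : R := sup [set N i (x i) | i in [set: nat]].

(* finiteness of the sup-norm: membership in X (resp. U) *)
Definition bounded_seq {d : nat -> nat} (N : forall i, 'rV[R]_(d i) -> R)
  (x : seqT d) : Prop := exists B, forall i, N i (x i) <= B.

Definition seq_diff {d : nat -> nat} (x y : seqT d) : seqT d :=
  fun i => x i - y i.

Variables (n p : nat -> nat).
Variables (nx : forall i, 'rV[R]_(n i) -> R) (nu : forall i, 'rV[R]_(p i) -> R).

Definition inX (x : seqT n) := bounded_seq nx x.
Definition inU (u : seqT p) := bounded_seq nu u.

Definition interconnection (I : nat -> seq nat) : Prop :=
  (forall i, i \notin I i) /\
  (forall i, exists N : nat, forall j, i \in I j -> (j < N)%N).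

(* f_i is given as F i xi y ui, where only the coordinates y j, j \in I i, of
   y matter (locality), i.e. F i is a function on
   R^{n_i} x prod_{j in I_i} R^{n_j} x R^{p_i}; continuity on this finite
   product is written out in epsilon-delta form w.r.t. the given norms. *)
Definition local_continuous (I : nat -> seq nat)
  (F : forall i, 'rV[R]_(n i) -> seqT n -> 'rV[R]_(p i) -> 'rV[R]_(n i)) : Prop :=
  forall i,
  (forall xi y y' ui, (forall j, j \in I i -> y j = y' j) ->
     F i xi y ui = F i xi y' ui) /\
  (forall xi y ui eps, 0 < eps -> exists2 del, 0 < del &
     forall xi' y' ui', nx i (xi' - xi) < del ->
       (forall j, j \in I i -> nx j (y' j - y j) < del) ->
       nu i (ui' - ui) < del ->
       nx i (F i xi' y' ui' - F i xi y ui) < eps).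

Variable F : forall i, 'rV[R]_(n i) -> seqT n -> 'rV[R]_(p i) -> 'rV[R]_(n i).

Definition fnet (x : seqT n) (u : seqT p) : seqT n := fun i => F i (x i) x (u i).

Definition well_posed : Prop :=
  forall x u, inX x -> inU u -> inX (fnet x u).

Definition inUU (u : nat -> seqT p) : Prop :=
  (forall k, inU (u k)) /\ exists B, forall k, supnorm nu (u k) <= B.

Definition normUU (u : nat -> seqT p) : R :=
  sup [set supnorm nu (u k) | k in [set: nat]].

Fixpoint traj (xi : seqT n) (u : nat -> seqT p) (k : nat) : seqT n :=
  match k with
  | O => xi
  | k'.+1 => fnet (traj xi u k') (u k')
  end.

Definition distA (A : set (seqT n)) (x : seqT n) : R :=
  inf [set supnorm nx (seq_diff x y) | y in A].

Definition closed_in_X (A : set (seqT n)) : Prop :=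
  (forall x, A x -> inX x) /\
  (forall x, inX x ->
     (forall e, 0 < e -> exists2 y, A y & supnorm nx (seq_diff x y) < e) -> A x).

Definition eISS (A : set (seqT n)) (C rho : R) (gamma : R -> R) : Prop :=
  [/\ 0 <= rho < 1, 1 <= C, classK gamma &
      forall xi u k, inX xi -> inUU u ->
        distA A (traj xi u k) <= Num.max (C * rho ^+ k * distA A xi) (gamma (normUU u))].

Definition eISS_Lyapunov (A : set (seqT n)) (M : nat) (V : seqT n -> R) : Prop :=
  exists wl wu b : R, [/\ 0 < wl, 0 < wu, 0 < b,
    (forall xi, inX xi ->
       wl * (distA A xi) `^ b <= V xi /\ V xi <= wu * (distA A xi) `^ b) &
    exists kappa (gt : R -> R), [/\ 0 <= kappa < 1, classK gt &
      forall xi u, inX xi -> inUU u ->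
        V (traj xi u M) <= Num.max (kappa * V xi) (gt (normUU u))]].

End Network.

Arguments is_norm {R d}.
Arguments classK {R}.
Arguments local_continuous {R n p}.
Arguments well_posed {R n p}.
Arguments closed_in_X {R n}.
Arguments eISS {R n p}.
Arguments inX {R n}.
Arguments inU {R p}.
Arguments distA {R n}.
Arguments inUU {R p}.
Arguments traj {R n p}.
Arguments fnet {R n p}.
Arguments normUU {R p}.
Arguments eISS_Lyapunov {R n p}.

(* Main.v *)
Require Import Defs.
From HB Require Import structures.
From mathcomp Require Import all_boot all_order all_algebra.
From mathcomp Require Import all_classical all_reals all_analysis.
From mathcomp Require Import ring.
Import Order.TTheory GRing.Theory Num.Theory.
Import numFieldNormedType.Exports.
Local Open Scope classical_set_scope.
Local Open Scope ring_scope.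

Lemma sup_ge0_gen (R : realType) (S : set R) :
  (forall s, S s -> 0 <= s) -> 0 <= sup S.
Proof.
move=> H; have [hs|hs] := pselect (has_sup S).
- case: (hs) => [[s Ss] hub]; apply: le_trans (H _ Ss) _.
  exact: (ub_le_sup hub).
- by rewrite sup_out.
Qed.

Lemma powcont (R : realType) (wu b : R) : 0 < b ->
  continuous (fun y : R => wu * (Num.max y 0) `^ b).
Proof.
move=> b0 t.
have [tn|tp|->] := ltgtP t 0.
- apply/cvgrPdist_lt => e e0; near=> y.
  have yn : y < 0 by near: y; exact: lt_nbhsl.
  rewrite (max_idPr (ltW yn)) (max_idPr (ltW tn)) subrr normr0 //.
- apply: (@cvg_trans _ ((fun y => wu * expR (b * ln y)) @ t)).
    apply: near_eq_cvg; near=> y.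
    have yp : 0 < y by near: y; exact: lt_nbhsr.
    by rewrite /= (max_idPl (ltW yp)) /powR gt_eqF.
  rewrite (max_idPl (ltW tp)) /powR gt_eqF //.
  have H1 : b * ln y @[y --> t] --> b * ln t.
    exact: (cvgM (cvg_cst b) (continuous_ln tp)).
  have H2 : expR (b * ln y) @[y --> t] --> expR (b * ln t).
    exact: (cvg_comp _ _ H1 (@continuous_expR R (b * ln t))).
  exact: (cvgM (cvg_cst wu) H2).
- have [->|wn] := eqVneq wu 0.
    by under eq_fun do rewrite mul0r; exact: cvg_cst.
  apply/cvgrPdist_lt => e e0.
  have ewp : 0 < e / `|wu| by rewrite divr_gt0 // normr_gt0.
  set d := (e / `|wu|) `^ b^-1.
  have d0 : 0 < d by exact: powR_gt0.
  near=> y.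
  have yd : y < d.
    near: y; exists d => // z /=; rewrite sub0r normrN => h.
    exact: le_lt_trans (ler_norm _) h.
  have -> : Num.max (0:R) 0 = 0 by rewrite maxxx.
  rewrite powR0 ?gt_eqF // mulr0 sub0r normrN normrM.
  rewrite -ltr_pdivlMl ?normr_gt0 // mulrC.
  have [yn|yp] := leP y 0.
    by rewrite powR0 ?gt_eqF // normr0.
  rewrite ger0_norm ?powR_ge0 //.
  have -> : e / `|wu| = d `^ b by rewrite /d -powRrM mulVf ?gt_eqF // powRr1 ?ltW.
  apply: gt0_ltr_powR => //; rewrite nnegrE ltW //.
Unshelve. all: end_near.
Qed.

Theorem proposition3 (R : realType) (n p : nat -> nat)
  (nx : forall i, 'rV[R]_(n i) -> R) (nu : forall i, 'rV[R]_(p i) -> R)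
  (I : nat -> seq nat)
  (F : forall i, 'rV[R]_(n i) -> seqT R n -> 'rV[R]_(p i) -> 'rV[R]_(n i))
  (A : set (seqT R n)) (C rho : R) (gamma : R -> R)
  (V : seqT R n -> R) (wl wu b kappa : R) :
  (forall i, (0 < n i)%N) -> (forall i, (0 < p i)%N) ->
  (forall i, is_norm (nx i)) -> (forall i, is_norm (nu i)) ->
  interconnection I -> local_continuous nx nu I F ->
  well_posed nx nu F ->
  A !=set0 -> closed_in_X nx A ->
  eISS nx nu F A C rho gamma ->
  (forall xi, inX nx xi -> 0 <= V xi) ->
  0 < wl -> 0 < wu -> 0 < b ->
  (forall xi, inX nx xi ->
     wl * (distA nx A xi) `^ b <= V xi /\ V xi <= wu * (distA nx A xi) `^ b) ->
  0 < kappa < 1 ->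
  (exists M : nat, (0 < M)%N /\
     forall xi u, inX nx xi -> inUU nu u ->
       V (traj F xi u M) <= Num.max (kappa * V xi) (wu * (gamma (normUU nu u)) `^ b))
  /\
  (forall M : nat, (0 < M)%N ->
     b^-1 * (ln (kappa * wl / (C `^ b * wu)) / ln rho) <= M%:R ->
     (forall xi u, inX nx xi -> inUU nu u ->
        V (traj F xi u M) <= Num.max (kappa * V xi) (wu * (gamma (normUU nu u)) `^ b))
     /\ eISS_Lyapunov nx nu F A M V).
Proof.
move=> n0 p0 nxN nuN Ic Fc wp A0 Acl [/andP[rho0 rho1] C1 gK traj_bd] V0 wl0 wu0 b0
  Vb /andP[k0 k1].
have dge0 : forall x, 0 <= distA nx A x.
  move=> x; rewrite /distA; apply: lb_le_inf.
    by case: A0 => y Ay; eexists; exists y.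
  move=> _ [y _ <-]; apply: sup_ge0_gen => _ [i _ <-].
  by case: (nxN i).
have trajX : forall xi u k, inX nx xi -> inUU nu u -> inX nx (traj F xi u k).
  move=> xi u k xX [uU _]; elim: k => //= k IH; exact: wp.
have C0 : 0 < C by exact: lt_le_trans ltr01 C1.
have Cb : 0 < C `^ b by exact: powR_gt0.
have step : forall M, (0 < M)%N ->
     b^-1 * (ln (kappa * wl / (C `^ b * wu)) / ln rho) <= M%:R ->
     forall xi u, inX nx xi -> inUU nu u ->
        V (traj F xi u M) <= Num.max (kappa * V xi) (wu * (gamma (normUU nu u)) `^ b).
  move=> M M0 hM.
  have key : C `^ b * (rho ^+ M) `^ b * wu <= kappa * wl.
    have [rz|rp] := eqVneq rho 0.
      rewrite rz expr0n eqn0Ngt M0 /= powR0 ?gt_eqF // mulr0 mul0r.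
      exact/ltW/mulr_gt0.
    have r0 : 0 < rho by rewrite lt_neqAle eq_sym rp.
    have L0 : ln rho < 0 by rewrite ln_lt0 // r0 rho1.
    set q := kappa * wl / (C `^ b * wu).
    have q0 : 0 < q by rewrite /q divr_gt0 ?mulr_gt0.
    have e1 : (rho ^+ M) `^ b = expR (b * (M%:R * ln rho)).
      rewrite /powR gt_eqF ?exprn_gt0 // lnXn //. by rewrite mulr_natl.
    have h1 := ler_wpM2l (ltW b0) hM.
    rewrite mulrA mulfV ?gt_eqF // mul1r in h1.
    have h2 := ler_wnM2r (ltW L0) h1.
    rewrite divfK ?lt_eqF // in h2.
    have h3 : (rho ^+ M) `^ b <= q.
      by rewrite e1 -(lnK q0) ler_expR mulrA.
    have -> : kappa * wl = C `^ b * q * wu.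
      by rewrite /q; field; rewrite ?gt_eqF // ?mulf_neq0 ?gt_eqF.
    by rewrite ler_pM2r // ler_pM2l.
  move=> xi u xX uU.
  have tX := trajX xi u M xX uU.
  have [_ Vup] := Vb _ tX.
  have [Vlo _] := Vb _ xX.
  have hd := traj_bd xi u M xX uU.
  apply: le_trans Vup _.
  move: hd; rewrite le_max => /orP[h|h]; rewrite le_max; apply/orP; [left|right].
  - have c0 : 0 <= C * rho ^+ M * distA nx A xi.
      apply: mulr_ge0; [apply: mulr_ge0; [exact: ltW | exact: exprn_ge0] | exact: dge0].
    apply: (@le_trans _ _ (wu * (C * rho ^+ M * distA nx A xi) `^ b)).
      rewrite ler_pM2l //; apply: ge0_ler_powR; [exact: ltW | rewrite nnegrE; exact: dge0 | rewrite nnegrE; exact: c0 | exact: h].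
    have Cr0 : 0 <= C * rho ^+ M by apply: mulr_ge0; [exact: ltW | exact: exprn_ge0].
    rewrite (powRM _ Cr0 (dge0 _)) (powRM _ (ltW C0) (exprn_ge0 _ rho0)).
    apply: (@le_trans _ _ (kappa * (wl * distA nx A xi `^ b))); last first.
      by rewrite ler_pM2l.
    have -> : wu * (C `^ b * (rho ^+ M) `^ b * distA nx A xi `^ b) =
      (C `^ b * (rho ^+ M) `^ b * wu) * distA nx A xi `^ b by ring.
    rewrite mulrA; apply: ler_wpM2r => //; exact: powR_ge0.
  - rewrite ler_pM2l //; apply: ge0_ler_powR; [exact: ltW | rewrite nnegrE; exact: dge0 | | exact: h].
    rewrite nnegrE; exact: le_trans (dge0 _) h.
split.
  set x := b^-1 * (ln (kappa * wl / (C `^ b * wu)) / ln rho).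
  exists (Num.trunc x).+1; split => //; apply: step => //.
  exact/ltW/truncnS_gt.
move=> M M0 hM; split; first exact: step.
exists wl, wu, b; split => //.
exists kappa, (fun s => wu * gamma s `^ b); split => //.
- by rewrite ltW.
- case: gK => g0 gc ginc.
  have gge0 : forall x, 0 <= x -> 0 <= gamma x.
    move=> x; rewrite le_eqVlt => /predU1P[<-|xp]; first by rewrite g0.
    by rewrite -g0; apply/ltW/ginc.
  split.
  + by rewrite g0 powR0 ?gt_eqF // mulr0.
  + apply: (@subspace_eq_continuous _ _ _
      ((fun y : R => wu * (Num.max y 0) `^ b) \o (from_subspace [set x : R | 0 <= x] gamma))).
      move=> x; rewrite inE => x0 /=; rewrite (max_idPl (gge0 _ x0)) //.
    move=> x; apply: continuous_comp; first exact: gc.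
    exact: powcont.
  + move=> x y x0 xy; rewrite ltr_pM2l //.
    apply: gt0_ltr_powR; [exact: b0 | rewrite nnegrE; exact: gge0 |
      rewrite nnegrE; apply: gge0; exact: le_trans (ltW xy) | exact: ginc].
- exact: step.
Qed.
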